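(* Fix $\alpha\in(0,1)$. Suppose there exists a solution $(\widehat{U}_*,\widehat{V}_{*})$ of the Taylored control problem $$0=\max_{u\in\mathcal{U}(x)}\Big\{r_u(x)+\alpha\,\mathcal{L}_u V(x)-(1-\alpha)V(x)\Big\},\qquad x\in\mathbb{R}_+^d,$$ (i.e. $\widehat{V}_*$ satisfies the equation and $\widehat{U}_*(x)\in\mathcal{U}(x)$ attains the maximum for every $x$) with $\widehat{V}_{*}\in\mathcal{C}^{2,\beta}(\mathbb{R}_+^d)$ for some $\beta\in(0,1)$. Suppose further that $\mathfrak{j}_{\widehat{U}_*}<\infty$ and $\mathfrak{j}_{U_*}<\infty$, and that $|\widehat{V}_*(x)|\le\Gamma(1+|x|^m)$ for some $m$ and $\Gamma$ (which may depend on $\alpha$). Then for all $x\in\mathbb{Z}_+^d$, $$\Big(|\widehat{V}_{*}(x)-V_{*}^{\alpha}(x)|\vee\big|V_{\widehat{U}_*}^{\alpha}(x)-V_{*}^{\alpha}(x)\big|\Big)\le \big(\mathfrak{j}_{\widehat{U}_*}^{2+\beta}\vee\mathfrak{j}_{U_*}^{2+\beta}\big)\left(\mathbb{E}_x^{\widehat{U}_*}\Big[\sum_{t=0}^{\infty}\alpha^t[D^2\widehat{V}_{*}]^*_{\beta,X_t\pm\mathfrak{j}_{\widehat{U}_*}}\Big]+\mathbb{E}_x^{U_*}\Big[\sum_{t=0}^{\infty}\alpha^t[D^2\widehat{V}_{*}]^*_{\beta,X_t\pm\mathfrak{j}_{U_*}}\Big]\right).$$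
   Context: Controlled Markov chain on $\mathbb{Z}_+^d$: at state $x$ the admissible actions are $\mathcal{U}(x)=\{u\in\mathbb{R}^{m'}:Au\le b(x)\}\cap\mathbb{D}$, with $\mathbb{D}$ a fixed countable discrete set and $b$ defined on $\mathbb{R}_+^d$; under action $u$ at $x$ a reward $r_u(x)$ is collected and the chain moves to $y$ with probability $P^u_{x,y}$. A stationary policy $U$ assigns $U(x)\in\mathcal{U}(x)$ to each state; $\mathbb{E}^U_x$ denotes expectation for the chain $(X_t)$ under $U$ started at $x$. For a policy $U$, $V^\alpha_U(x)=\mathbb{E}^U_x[\sum_{t\ge0}\alpha^t r_{U(X_t)}(X_t)]$; $V^\alpha_*(x)=\max_U V^\alpha_U(x)$ is the optimal value, attained by an optimal stationary policy $U_*$ and satisfying the Bellman equation $V(x)=\max_{u\in\mathcal{U}(x)}\{r_u(x)+\alpha\sum_yP^u_{x,y}V(y)\}$. Drift and second moments: $(\mu_u)_i(x)=\sum_yP^u_{x,y}(y_i-x_i)$, $(\sigma^2_u)_{ij}(x)=\sum_yP^u_{x,y}(y_i-x_i)(y_j-x_j)$; these and $r_u$ are assumed extended to functions of $x\in\mathbb{R}_+^d$ (for $u\in\mathbb{D}$), and $\mathcal{L}_uV(x)=\mu_u(x)'DV(x)+\tfrac12\mathrm{trace}(\sigma^2_u(x)'D^2V(x))$. The restriction of $\widehat U_*$ to $\mathbb{Z}_+^d$ is a stationary policy for the chain. For a stationary policy $U$, $\mathfrak{j}_U$ is the smallest integer (possibly $\infty$) such that $P^{U(x)}_{x,y}=0$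 whenever $|y-x|>\mathfrak{j}_U$. Notation: $|\cdot|$ Euclidean norm; $x\pm\epsilon=\{y\in\mathbb{R}_+^d:|y-x|\le\epsilon\}$; for a (vector- or matrix-valued) $f$ and $\Omega\subseteq\mathbb{R}_+^d$, $[f]^*_{\beta,\Omega}=\sup_{y,z\in\Omega}|f(y)-f(z)|/|y-z|^\beta$; $\mathcal{C}^{2,\beta}$ is the class of twice continuously differentiable functions whose second derivative is $\beta$-Hölder continuous; $D^2$ denotes the Hessian. *)

(* Defs.v *)
From HB Require Import structures.
From mathcomp Require Import all_boot all_order all_algebra.
From mathcomp Require Import all_classical all_reals all_analysis.
Set Implicit Arguments. Unset Strict Implicit. Unset Printing Implicit Defensive.
Import Order.TTheory GRing.Theory Num.Theory.
Local Open Scope classical_set_scope.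
Local Open Scope ring_scope.

Section Defs.
Variable R : realType.

Definition enorm (p q : nat) (M : 'M[R]_(p, q)) : R :=
  Num.sqrt (\sum_(i < p) \sum_(j < q) M i j ^+ 2).

Definition orthant (d : nat) : set 'rV[R]_d := [set x | forall i, 0 <= x 0 i].

Definition emb (d : nat) (x : 'rV[nat]_d) : 'rV[R]_d := map_mx (fun n => n%:R) x.

(* x +- eps = { y in R_+^d : |y - x| <= eps } *)
Definition cball (d : nat) (x : 'rV[R]_d) (eps : R) : set 'rV[R]_d :=
  [set y | orthant y /\ enorm (y - x) <= eps].

(* Hölder seminorm [f]^*_{beta,Om}; the supremum of the empty family is 0 *)
Definition holder (d p q : nat) (beta : R) (f : 'rV[R]_d -> 'M[R]_(p, q))
    (Om : set 'rV[R]_d) : \bar R :=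
  ereal_sup ([set 0%E] `|`
    [set v | exists y z, [/\ Om y, Om z, y != z &
       v = ((enorm (f y - f z)) / (enorm (y - z)) `^ beta)%:E]]).

Definition adm (d m k : nat) (Dset : set 'cV[R]_m) (A : 'M[R]_(k, m))
    (b : 'rV[R]_d -> 'cV[R]_k) (x : 'rV[R]_d) : set 'cV[R]_m :=
  [set u | Dset u /\ forall l, (A *m u) l 0 <= b x l 0].

Definition countable_discrete (m : nat) (Dset : set 'cV[R]_m) : Prop :=
  countable Dset /\
  forall u, Dset u -> exists2 e : R, 0 < e & forall v, Dset v -> v != u -> e <= enorm (v - u).

Definition ssum (d : nat) (f : 'rV[nat]_d -> R) : \bar R :=
  (\esum_(y in [set: 'rV[nat]_d]) (Num.max (f y) 0)%:E
   - \esum_(y in [set: 'rV[nat]_d]) (Num.max (- f y) 0)%:E)%E.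

Definition summable_st (d : nat) (f : 'rV[nat]_d -> R) : Prop :=
  (\esum_(y in [set: 'rV[nat]_d]) (`| f y |)%:E < +oo)%E.

(* Kernel type: P u x y = P^u_{x,y} *)
Definition trans_kernel (d m : nat) := 'cV[R]_m -> 'rV[nat]_d -> 'rV[nat]_d -> R.

(* E^U_x [ f(X_t) ] for nonnegative f, computed through the t-step kernel *)
Fixpoint Et (d m : nat) (P : trans_kernel d m) (U : 'rV[nat]_d -> 'cV[R]_m)
    (f : 'rV[nat]_d -> \bar R) (t : nat) : 'rV[nat]_d -> \bar R :=
  match t with
  | 0 => f
  | t'.+1 => fun x => (\esum_(y in [set: 'rV[nat]_d])
                          ((P (U x) x y)%:E * Et P U f t' y))%E
  end.

(* E^U_x [ sum_t alpha^t f(X_t) ] for nonnegative f (Tonelli) *)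
Definition Edisc (d m : nat) (P : trans_kernel d m) (U : 'rV[nat]_d -> 'cV[R]_m)
    (alpha : R) (f : 'rV[nat]_d -> \bar R) (x : 'rV[nat]_d) : \bar R :=
  (\sum_(0 <= t <oo) ((alpha ^+ t)%:E * Et P U f t x))%E.

Definition VU (d m : nat) (P : trans_kernel d m) (r : 'cV[R]_m -> 'rV[R]_d -> R)
    (U : 'rV[nat]_d -> 'cV[R]_m) (alpha : R) (x : 'rV[nat]_d) : \bar R :=
  (Edisc P U alpha (fun y => (Num.max (r (U y) (emb y)) 0)%:E) x
   - Edisc P U alpha (fun y => (Num.max (- r (U y) (emb y)) 0)%:E) x)%E.

Definition policy (d m k : nat) (Dset : set 'cV[R]_m) (A : 'M[R]_(k, m))
    (b : 'rV[R]_d -> 'cV[R]_k) (U : 'rV[nat]_d -> 'cV[R]_m) : Prop :=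
  forall x, adm Dset A b (emb x) (U x).

Definition jbound (d m : nat) (P : trans_kernel d m) (U : 'rV[nat]_d -> 'cV[R]_m) (j : nat) :=
  forall x y, (j%:R < enorm (emb y - emb x)) -> P (U x) x y = 0.

Definition jump_size (d m : nat) (P : trans_kernel d m) (U : 'rV[nat]_d -> 'cV[R]_m) (j : nat) :=
  jbound P U j /\ forall j', jbound P U j' -> (j <= j')%N.

(* Differentiability relative to a set (for C^2 up to the boundary of R_+^d) *)
Definition deriv_within (d p q : nat) (Om : set 'rV[R]_d)
    (f : 'rV[R]_d -> 'M[R]_(p, q)) (x : 'rV[R]_d) (L : 'rV[R]_d -> 'M[R]_(p, q)) :=
  forall e : R, 0 < e -> exists2 del : R, 0 < del & forall y, Om y ->
    enorm (y - x) < del -> enorm (f y - f x - L (y - x)) <= e * enorm (y - x).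

Definition cont_within (d p q : nat) (Om : set 'rV[R]_d)
    (f : 'rV[R]_d -> 'M[R]_(p, q)) (x : 'rV[R]_d) :=
  forall e : R, 0 < e -> exists2 del : R, 0 < del & forall y, Om y ->
    enorm (y - x) < del -> enorm (f y - f x) <= e.

Definition C2beta (d : nat) (beta : R) (V : 'rV[R]_d -> R)
    (DV : 'rV[R]_d -> 'rV[R]_d) (D2V : 'rV[R]_d -> 'M[R]_d) : Prop :=
  (forall x, orthant x ->
     deriv_within (@orthant d) (fun y => (V y)%:M : 'M[R]_1) x
        (fun h => (\sum_i DV x 0 i * h 0 i)%:M)
  /\ deriv_within (@orthant d) DV x (fun h => h *m D2V x)
  /\ cont_within (@orthant d) D2V x)
  /\ forall rad : R, (holder beta D2V [set y | orthant y /\ (enorm y <= rad)%R] < +oo)%E.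

Definition gen (d : nat) (mu : 'rV[R]_d) (sig2 : 'M[R]_d) (DVx : 'rV[R]_d) (D2Vx : 'M[R]_d) : R :=
  \sum_i mu 0 i * DVx 0 i + 2^-1 * \tr (sig2^T *m D2Vx).

End Defs.

(* Main.v *)
Require Import Defs.
From HB Require Import structures.
From mathcomp Require Import all_boot all_order all_algebra.
From mathcomp Require Import all_classical all_reals all_analysis.
From mathcomp.algebra_tactics Require Import ring lra.
Import Order.TTheory GRing.Theory Num.Theory.
Set Implicit Arguments. Unset Strict Implicit. Unset Printing Implicit Defensive.
Local Open Scope classical_set_scope.
Local Open Scope ring_scope.

Section CS.
Variable R : realType.

Lemma cs_sum (I : eqType) (s : seq I) (a b : I -> R) :
  (\sum_(i <- s) a i * b i) ^+ 2 <=
  (\sum_(i <- s) a i ^+ 2) * (\sum_(i <- s) b i ^+ 2).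
Proof.
set A := \sum_(i <- s) a i ^+ 2; set B := \sum_(i <- s) a i * b i;
set C := \sum_(i <- s) b i ^+ 2.
have A0 : 0 <= A by rewrite /A; apply: sumr_ge0 => i _; exact: sqr_ge0.
have C0 : 0 <= C by rewrite /C; apply: sumr_ge0 => i _; exact: sqr_ge0.
have key t : 0 <= A * t ^+ 2 + 2 * B * t + C.
  have -> : A * t ^+ 2 + 2 * B * t + C = \sum_(i <- s) (a i * t + b i) ^+ 2.
    rewrite (eq_bigr (fun i => t ^+ 2 * a i ^+ 2 + (2 * t) * (a i * b i) + b i ^+ 2));
      last by move=> i _; ring.
    by rewrite !big_split /= -!mulr_sumr /A /B /C; ring.
  by apply: sumr_ge0 => i _; exact: sqr_ge0.
have [A00|Apos] := eqVneq A 0.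
  have a0 : forall i, i \in s -> a i = 0.
    move=> i si; apply/eqP; rewrite -sqrf_eq0; apply/eqP.
    move: A00; rewrite /A big_seq => /eqP; rewrite psumr_eq0; last by move=> *; exact: sqr_ge0.
    by move=> /allP /(_ i si) /implyP /(_ si) /eqP.
  have -> : B = 0 by rewrite /B big_seq big1 // => i si; rewrite a0 // mul0r.
  by rewrite expr0n /= mulr_ge0.
have Ap : 0 < A by rewrite lt0r Apos A0.
have := key (- B / A).
have -> : A * (- B / A) ^+ 2 + 2 * B * (- B / A) + C = C - B ^+ 2 / A.
  by field; exact: Apos.
rewrite subr_ge0 ler_pdivrMr // => h; by rewrite mulrC.
Qed.

Lemma cs_sqrt (I : eqType) (s : seq I) (a b : I -> R) :
  `|\sum_(i <- s) a i * b i| <=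
  Num.sqrt (\sum_(i <- s) a i ^+ 2) * Num.sqrt (\sum_(i <- s) b i ^+ 2).
Proof.
have A0 : 0 <= \sum_(i <- s) a i ^+ 2 by apply: sumr_ge0 => i _; exact: sqr_ge0.
rewrite -sqrtrM // -sqrtr_sqr ler_sqrt; first exact: cs_sum.
by apply: mulr_ge0 => //; apply: sumr_ge0 => i _; exact: sqr_ge0.
Qed.

Lemma enorm_ge0 p q (M : 'M[R]_(p, q)) : 0 <= enorm M.
Proof. exact: sqrtr_ge0. Qed.

Lemma enorm_rowE q (v : 'rV[R]_q) : enorm v = Num.sqrt (\sum_j v 0 j ^+ 2).
Proof. by rewrite /enorm big_ord1. Qed.

Lemma enormZ p q (c : R) (M : 'M[R]_(p, q)) : enorm (c *: M) = `|c| * enorm M.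
Proof.
rewrite /enorm -sqrtr_sqr -sqrtrM ?sqr_ge0 //; congr Num.sqrt.
rewrite mulr_sumr; apply: eq_bigr => i _; rewrite mulr_sumr; apply: eq_bigr => j _.
by rewrite mxE; ring.
Qed.

Lemma enorm_coord p q (M : 'M[R]_(p, q)) i j : `|M i j| <= enorm M.
Proof.
rewrite /enorm -sqrtr_sqr ler_sqrt; last by apply: sumr_ge0 => *; apply: sumr_ge0 => *; exact: sqr_ge0.
rewrite (bigD1 i) //= (bigD1 j) //= -addrA lerDl.
apply: addr_ge0; first by apply: sumr_ge0 => *; exact: sqr_ge0.
by apply: sumr_ge0 => *; apply: sumr_ge0 => *; exact: sqr_ge0.
Qed.

Lemma enorm_scalar1 (a : R) : enorm (a%:M : 'M[R]_1) = `|a|.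
Proof. by rewrite /enorm !big_ord1 mxE /= mulr1n sqrtr_sqr. Qed.

Lemma enorm_eq0 p q (M : 'M[R]_(p, q)) : enorm M = 0 -> M = 0.
Proof.
move=> h; apply/matrixP => i j; rewrite mxE; apply/eqP; rewrite -normr_le0 -h.
exact: enorm_coord.
Qed.

Lemma enorm0 p q : enorm (0 : 'M[R]_(p, q)) = 0.
Proof. by rewrite /enorm big1 ?sqrtr0 // => i _; rewrite big1 // => j _; rewrite mxE expr0n. Qed.

Lemma cs_row q (v w : 'rV[R]_q) : `|\sum_i v 0 i * w 0 i| <= enorm v * enorm w.
Proof. by rewrite !enorm_rowE; apply: cs_sqrt. Qed.

Lemma cs_quad q (h : 'rV[R]_q) (C : 'M[R]_q) :
  `|\sum_i \sum_k h 0 k * h 0 i * C k i| <= enorm h ^+ 2 * enorm C.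
Proof.
rewrite pair_big /=.
have := @cs_sqrt _ (index_enum (prod 'I_q 'I_q)) (fun p => h 0 p.2 * h 0 p.1) (fun p => C p.2 p.1).
move=> /le_trans; apply.
apply: ler_pM; [exact: sqrtr_ge0|exact: sqrtr_ge0| |].
  rewrite (eq_bigr (fun p : 'I_q * 'I_q => h 0 p.2 ^+ 2 * h 0 p.1 ^+ 2)); last by move=> p _; ring.
  rewrite -(pair_big xpredT xpredT (fun i k => h 0 k ^+ 2 * h 0 i ^+ 2)) /=.
  rewrite (eq_bigr (fun i => (\sum_k h 0 k ^+ 2) * h 0 i ^+ 2)); last by move=> i _; rewrite mulr_suml.
  rewrite -mulr_sumr enorm_rowE -expr2 sqrtr_sqr ger0_norm ?sqr_sqrtr //;
   by apply: sumr_ge0 => *; exact: sqr_ge0.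
rewrite -(pair_big xpredT xpredT (fun i k => C k i ^+ 2)) /= exchange_big /=.
by [].
Qed.

End CS.
Section OneD.
Variable R : realType.

Definition der1 (f : R -> R) (s f' : R) := forall e : R, 0 < e -> exists2 del : R, 0 < del &
  forall s', 0 <= s' <= 1 -> `|s' - s| < del -> `|f s' - f s - (s' - s) * f'| <= e * `|s' - s|.

Lemma der1_step (f : R -> R) (s fp e M u : R) : `|f u - f s - (u - s) * fp| <= e * `|u - s| ->
  `|fp| <= M -> `|f u - f s| <= `|u - s| * (M + e).
Proof.
move=> h hM.
have := ler_normD (f u - f s - (u - s) * fp) ((u - s) * fp).
rewrite subrK normrM => h2.
apply: (le_trans h2); rewrite mulrDr.
have : `|u - s| * `|fp| <= `|u - s| * M by apply: ler_wpM2l.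
move: h; rewrite (mulrC e); lra.
Qed.

Lemma L1 (f f' : R -> R) (M : R) :
  (forall s, 0 <= s <= 1 -> der1 f s (f' s)) ->
  (forall s, 0 <= s <= 1 -> `|f' s| <= M) ->
  forall s, 0 <= s <= 1 -> `|f s - f 0| <= M * s.
Proof.
move=> hd hM.
suff key : forall eps, 0 < eps -> forall s, 0 <= s <= 1 -> `|f s - f 0| <= (M + eps) * s + eps.
  move=> s hs; apply/ler_addgt0Pr => e he.
  have := key (e / 2) ltac:(by rewrite divr_gt0) s hs.
  move: hs => /andP[s0 s1] h; apply: (le_trans h).
  have : e / 2 * s <= e / 2 by rewrite ger_pMr ?divr_gt0.
  lra.
move=> eps heps.
pose A := [set t : R | (0 <= t <= 1) /\ forall u, 0 <= u <= t -> `|f u - f 0| <= (M + eps) * u + eps].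
have A0 : A 0.
  split; first by rewrite lexx ler01.
  move=> u /andP[u0 u1]; have -> : u = 0 by apply/eqP; rewrite eq_le u1 u0.
  by rewrite subrr normr0 mulr0 add0r ltW.
have hsA : has_sup A by split; [exists 0 | exists 1 => t [/andP[_ ->]]].
set c := sup A.
have c0 : 0 <= c := sup_upper_bound hsA A0.
have c1 : c <= 1 by apply: ge_sup; [exists 0|move=> t [/andP[_ ->]]].
have c01 : 0 <= c <= 1 by rewrite c0 c1.
have M0 : 0 <= M by apply: le_trans (hM c c01); exact: normr_ge0.
have [del del0 hdel] := hd c c01 eps heps.
have Ac : A c.
  split => // u /andP[u0 uc].
  have [uc'|ucE] := ltP u c.
    have hcu : 0 < c - u by rewrite subr_gt0.
    have [t [/andP[t0 t1] ht] ut] := sup_adherent hcu hsA.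
    apply: ht; rewrite u0 /=; rewrite opprB addrC subrK in ut; exact: ltW.
  have -> : u = c by apply/eqP; rewrite eq_le uc ucE.
  have [t At tc] := sup_adherent del0 hsA.
  have tlc : t <= c := sup_upper_bound hsA At.
  case: At => /andP[t0 t1] ht.
  have h1 : `|f t - f 0| <= (M + eps) * t + eps by apply: ht; rewrite t0 lexx.
  have h2 : `|f t - f c| <= `|t - c| * (M + eps).
    apply: der1_step (hM c c01); apply: hdel; first by rewrite t0 t1.
    rewrite distrC ger0_norm ?subr_ge0 //; rewrite -/c in tc; lra.
  have ct : `|c - t| = c - t by rewrite ger0_norm // subr_ge0.
  rewrite (distrC t c) ct in h2.
  have := ler_normD (f c - f t) (f t - f 0).
  rewrite addrA subrK => h3; apply: (le_trans h3).
  rewrite (distrC (f c)).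
  have e : (M + eps) * t + eps + (c - t) * (M + eps) = (M + eps) * c + eps by ring.
  lra.
have c1E : c = 1.
  apply/eqP; rewrite eq_le c1 /=; rewrite leNgt; apply/negP => clt1.
  pose t := Num.min (c + del / 2) 1.
  have tc : c < t by rewrite /t lt_min clt1 andbT ltrDl divr_gt0.
  have t1 : t <= 1 by rewrite /t ge_min lexx orbT.
  have tc2 : t <= c + del / 2 by rewrite /t ge_min lexx.
  suff At : A t by have := sup_upper_bound hsA At; rewrite -/c leNgt tc.
  split; first by rewrite t1 andbT; apply: le_trans c0 (ltW tc).
  move=> u /andP[u0 ut].
  have [uc|cu] := leP u c; first by case: Ac => _; apply; rewrite u0 uc.
  have u1 : u <= 1 by apply: le_trans t1.
  have h2 : `|f u - f c| <= `|u - c| * (M + eps).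
    apply: der1_step (hM c c01); apply: hdel; first by rewrite u0.
    rewrite ger0_norm ?subr_ge0 ?ltW //. have : 0 < del by []. lra.
  have h1 : `|f c - f 0| <= (M + eps) * c + eps by case: Ac => _; apply; rewrite c0 lexx.
  have uc2 : `|u - c| = u - c by rewrite ger0_norm // subr_ge0 ltW.
  rewrite uc2 in h2.
  have := ler_normD (f u - f c) (f c - f 0).
  rewrite addrA subrK => h3; apply: (le_trans h3).
  have e : (M + eps) * c + eps + (u - c) * (M + eps) = (M + eps) * u + eps by ring.
  lra.
move=> s /andP[s0 s1]; case: Ac => _; apply; rewrite s0 /=; by rewrite c1E.
Qed.

Lemma der1_add (f g : R -> R) (s a b : R) : der1 f s a -> der1 g s b -> der1 (fun x => f x + g x) s (a + b).
Proof.
move=> hf hg e e0.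
have e20 : 0 < e / 2 by rewrite divr_gt0.
have [d1 d10 h1] := hf _ e20; have [d2 d20 h2] := hg _ e20.
exists (Num.min d1 d2); first by rewrite lt_min d10 d20.
move=> s' hs' hd; rewrite lt_min in hd; case/andP: hd => hd1 hd2.
have := h1 s' hs' hd1; have := h2 s' hs' hd2.
have -> : f s' + g s' - (f s + g s) - (s' - s) * (a + b) =
  (f s' - f s - (s' - s) * a) + (g s' - g s - (s' - s) * b) by ring.
move=> k2 k1; apply: le_trans (ler_normD _ _) _.
have : e / 2 * `|s' - s| + e / 2 * `|s' - s| = e * `|s' - s| by field.
lra.
Qed.

Lemma der1_scale (f : R -> R) (s a c : R) : der1 f s a -> der1 (fun x => c * f x) s (c * a).
Proof.
move=> hf e e0.
have e20 : 0 < e / (`|c| + 1) by rewrite divr_gt0 // ltr_pwDr // ltr01.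
have [d1 d10 h1] := hf _ e20.
exists d1 => // s' hs' hd.
have -> : c * f s' - c * f s - (s' - s) * (c * a) = c * (f s' - f s - (s' - s) * a) by ring.
rewrite normrM; have := h1 s' hs' hd => k.
have k2 : `|c| * `|f s' - f s - (s' - s) * a| <= `|c| * (e / (`|c| + 1) * `|s' - s|).
  by apply: ler_wpM2l.
apply: le_trans k2 _.
rewrite mulrA; apply: ler_wpM2r => //.
have c1 : 0 < `|c| + 1 by rewrite ltr_pwDr // ltr01.
have hc : `|c| / (`|c| + 1) <= 1 by rewrite ler_pdivrMr // mul1r lerDl ler01.
have -> : `|c| * (e / (`|c| + 1)) = e * (`|c| / (`|c| + 1)) by rewrite mulrCA mulrA.
by rewrite -{2}(mulr1 e); apply: ler_wpM2l => //; exact: ltW.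
Qed.

Lemma der1_cst s (a : R) : der1 (fun _ => a) s 0.
Proof.
move=> e e0; exists 1 => // s' _ _.
have -> : a - a - (s' - s) * 0 = 0 by ring.
by rewrite normr0; apply: mulr_ge0; [exact: ltW|exact: normr_ge0].
Qed.

Lemma der1_id (s : R) : der1 (fun x => x) s 1.
Proof.
move=> e e0; exists 1 => // s' _ _.
have -> : s' - s - (s' - s) * 1 = 0 by ring.
by rewrite normr0; apply: mulr_ge0; [exact: ltW|exact: normr_ge0].
Qed.

Lemma der1_sq2 (s : R) : der1 (fun x => x ^+ 2 / 2) s s.
Proof.
move=> e e0; exists e => // s' _ hd.
have -> : s' ^+ 2 / 2 - s ^+ 2 / 2 - (s' - s) * s = (s' - s) * (s' - s) / 2 by field.
rewrite normrM normrM (ger0_norm (x := 2^-1)) ?invr_ge0 ?ler0n //.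
rewrite -mulrA (mulrC e); apply: ler_wpM2l => //.
have := normr_ge0 (s' - s); lra.
Qed.

End OneD.
Section Taylor.
Variables (R : realType) (d : nat) (V : 'rV[R]_d -> R) (DV : 'rV[R]_d -> 'rV[R]_d)
  (D2V : 'rV[R]_d -> 'M[R]_d).
Hypothesis hV : forall x, orthant x -> deriv_within (@orthant R d)
  (fun y => (V y)%:M : 'M[R]_1) x (fun h => (\sum_i DV x 0 i * h 0 i)%:M).
Hypothesis hDV : forall x, orthant x -> deriv_within (@orthant R d) DV x (fun h => h *m D2V x).

Lemma der1_eq (f g : R -> R) s a b : (forall x, f x = g x) -> a = b -> der1 f s a -> der1 g s b.
Proof.
move=> fg <- hf e e0; have [del d0 hd] := hf e e0; exists del => // s' hs hs'.
by rewrite -!fg; apply: hd.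
Qed.

Lemma der1_of (F : R -> R) s a K K2 : 0 <= K -> 0 <= K2 ->
  (forall e, 0 < e -> exists2 del : R, 0 < del & forall s', 0 <= s' <= 1 ->
     `|s' - s| * K < del -> `|F s' - F s - (s' - s) * a| <= e * (`|s' - s| * K2)) ->
  der1 F s a.
Proof.
move=> K0 K20 h e e0.
have k2 : 0 < K2 + 1 by rewrite ltr_pwDr // ltr01.
have k1 : 0 < K + 1 by rewrite ltr_pwDr // ltr01.
have [del d0 hd] := h (e / (K2 + 1)) (divr_gt0 e0 k2).
exists (del / (K + 1)); first by rewrite divr_gt0.
move=> s' hs hs'.
have : `|s' - s| * K < del.
  apply: le_lt_trans (_ : `|s' - s| * (K + 1) < del).
    by apply: ler_wpM2l => //; rewrite lerDl ler01.
  by rewrite -ltr_pdivlMr.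
move=> /(hd s' hs) /le_trans; apply.
have -> : e / (K2 + 1) * (`|s' - s| * K2) = (e * `|s' - s|) * (K2 / (K2 + 1)) by ring.
rewrite -{2}(mulr1 (e * `|s' - s|)); apply: ler_wpM2l; first by rewrite mulr_ge0 // ltW.
by rewrite ler_pdivrMr // mul1r lerDl ler01.
Qed.

Definition pth (x0 h : 'rV[R]_d) (s : R) := x0 + s *: h.

Lemma pth_orth x0 z s : orthant x0 -> orthant z -> 0 <= s <= 1 -> orthant (pth x0 (z - x0) s).
Proof.
move=> ox oz /andP[s0 s1] i; rewrite /pth !mxE.
have := ox i; have := oz i => a b.
have -> : x0 0 i + s * (z 0 i - x0 0 i) = (1 - s) * x0 0 i + s * z 0 i by ring.
by apply: addr_ge0; apply: mulr_ge0 => //; rewrite subr_ge0.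
Qed.

Lemma pth_diff x0 h s s' : pth x0 h s' - pth x0 h s = (s' - s) *: h.
Proof. by rewrite /pth scalerBl; apply/matrixP => i j; rewrite !mxE; ring. Qed.

Lemma enorm11 (M : 'M[R]_1) : enorm M = `|M 0 0|.
Proof. by rewrite /enorm !big_ord1 sqrtr_sqr. Qed.

Lemma der_V x0 z s : orthant x0 -> orthant z -> 0 <= s <= 1 ->
  der1 (fun s => V (pth x0 (z - x0) s)) s (\sum_i DV (pth x0 (z - x0) s) 0 i * (z - x0) 0 i).
Proof.
move=> ox oz hs; set h := z - x0.
apply: (der1_of (K := enorm h) (K2 := enorm h)); [exact: enorm_ge0|exact: enorm_ge0|].
move=> e e0; have [del d0 hd] := hV (pth_orth ox oz hs) e0; exists del => // s' hs' hlt.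
have := hd _ (pth_orth ox oz hs'); rewrite pth_diff enormZ => /(_ hlt).
rewrite enorm11 !mxE /= !mulr1n.
have -> : \sum_i DV (pth x0 h s) 0 i * ((s' - s) *: h) 0 i =
          (s' - s) * \sum_i DV (pth x0 h s) 0 i * h 0 i.
  by rewrite mulr_sumr; apply: eq_bigr => i _; rewrite mxE; ring.
by [].
Qed.

Lemma der_DV x0 z s : orthant x0 -> orthant z -> 0 <= s <= 1 ->
  der1 (fun s => \sum_i DV (pth x0 (z - x0) s) 0 i * (z - x0) 0 i) s
       (\sum_i \sum_k (z - x0) 0 k * (z - x0) 0 i * D2V (pth x0 (z - x0) s) k i).
Proof.
move=> ox oz hs; set h := z - x0.
apply: (der1_of (K := enorm h) (K2 := enorm h * enorm h)); [exact: enorm_ge0|by rewrite mulr_ge0 ?enorm_ge0|].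
move=> e e0; have [del d0 hd] := hDV (pth_orth ox oz hs) e0; exists del => // s' hs' hlt.
have := hd _ (pth_orth ox oz hs'); rewrite pth_diff enormZ => /(_ hlt) hb.
set p1 := pth x0 h s'; set p0 := pth x0 h s.
have -> : \sum_i DV p1 0 i * h 0 i - \sum_i DV p0 0 i * h 0 i -
   (s' - s) * (\sum_i \sum_k h 0 k * h 0 i * D2V p0 k i) =
   \sum_i (DV p1 - DV p0 - (s' - s) *: h *m D2V p0) 0 i * h 0 i.
  rewrite mulr_sumr -!sumrB; apply: eq_bigr => i _.
  have E : ((s' - s) *: h *m D2V p0) 0 i = (s' - s) * \sum_k h 0 k * D2V p0 k i.
    rewrite !mxE mulr_sumr; apply: eq_bigr => k _; rewrite !mxE; ring.
  have F : (DV p1 - DV p0 - (s' - s) *: h *m D2V p0) 0 i =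
     DV p1 0 i - DV p0 0 i - ((s' - s) *: h *m D2V p0) 0 i by rewrite !mxE.
  have G : \sum_k h 0 k * h 0 i * D2V p0 k i = (\sum_k h 0 k * D2V p0 k i) * h 0 i.
    by rewrite mulr_suml; apply: eq_bigr => k _; ring.
  rewrite F E G; ring.
apply: le_trans (cs_row _ _) _.
rewrite (_ : e * _ = e * (`|s' - s| * enorm h) * enorm h); last by ring.
by apply: ler_wpM2r; [exact: enorm_ge0|exact: hb].
Qed.

Lemma taylor (x0 z : 'rV[R]_d) (beta H : R) : orthant x0 -> orthant z -> 0 <= beta -> 0 <= H ->
  (forall w, orthant w -> enorm (w - x0) <= enorm (z - x0) ->
     enorm (D2V w - D2V x0) <= H * enorm (w - x0) `^ beta) ->
  `|V z - V x0 - (\sum_i (z - x0) 0 i * DV x0 0 i +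
      2^-1 * \sum_i \sum_k (z - x0) 0 k * (z - x0) 0 i * D2V x0 k i)|
    <= H * enorm (z - x0) ^+ 2 * enorm (z - x0) `^ beta.
Proof.
move=> ox oz b0 H0 hH; set h := z - x0.
set Mb := H * enorm h ^+ 2 * enorm h `^ beta.
set L0 := \sum_i DV x0 0 i * h 0 i.
set Q0 := \sum_i \sum_k h 0 k * h 0 i * D2V x0 k i.
have p0 : pth x0 h 0 = x0 by rewrite /pth scale0r addr0.
have p1 : pth x0 h 1 = z by rewrite /pth scale1r /h addrC subrK.
pose psi s := \sum_i DV (pth x0 h s) 0 i * h 0 i - L0 - s * Q0.
pose dpsi s := \sum_i \sum_k h 0 k * h 0 i * D2V (pth x0 h s) k i - Q0.
have dpsiP : forall s, 0 <= s <= 1 -> der1 psi s (dpsi s).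
  move=> s hs.
  have hf : der1 (fun x => \sum_i DV (pth x0 h x) 0 i * h 0 i + ((- Q0) * x + (- L0))) s
     ((\sum_i \sum_k h 0 k * h 0 i * D2V (pth x0 h s) k i) + ((- Q0) * 1 + 0)).
    apply: der1_add; first exact: der_DV.
    apply: der1_add; [exact: der1_scale (der1_id s) | exact: der1_cst].
  by apply: der1_eq hf; [move=> x; rewrite /psi; ring | rewrite /dpsi; ring].
have dpsiB : forall s, 0 <= s <= 1 -> `|dpsi s| <= Mb.
  move=> s /andP[s0 s1].
  have -> : dpsi s = \sum_i \sum_k h 0 k * h 0 i * (D2V (pth x0 h s) - D2V x0) k i.
    rewrite /dpsi /Q0 -sumrB; apply: eq_bigr => i _; rewrite -sumrB; apply: eq_bigr => k _.
    by rewrite !mxE; ring.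
  apply: le_trans (cs_quad _ _) _.
  rewrite /Mb -mulrA mulrCA; apply: ler_wpM2l; first by rewrite exprn_ge0 ?enorm_ge0.
  have en : enorm (pth x0 h s - x0) = s * enorm h.
    by rewrite -{2}p0 pth_diff subr0 enormZ ger0_norm.
  have hs : 0 <= s <= 1 by rewrite s0 s1.
  apply: le_trans (hH _ (pth_orth ox oz hs) _) _.
    by rewrite en; have := enorm_ge0 h; nra.
  apply: ler_wpM2l => //; rewrite en.
  apply: ge0_ler_powR => //; rewrite ?nnegrE ?mulr_ge0 ?enorm_ge0 //.
  by have := enorm_ge0 h; nra.
have Hpsi := L1 dpsiP dpsiB.
have psi0 : psi 0 = 0 by rewrite /psi p0 mul0r subr0 /L0 subrr.
pose phi s := V (pth x0 h s) - V x0 - s * L0 - s ^+ 2 / 2 * Q0.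
have dphiP : forall s, 0 <= s <= 1 -> der1 phi s (psi s).
  move=> s hs.
  have hf : der1 (fun x => V (pth x0 h x) + ((- L0) * x + ((- Q0) * (x ^+ 2 / 2) + (- V x0)))) s
     ((\sum_i DV (pth x0 h s) 0 i * h 0 i) + ((- L0) * 1 + ((- Q0) * s + 0))).
    apply: der1_add; first exact: der_V.
    apply: der1_add; first exact: der1_scale (der1_id s).
    apply: der1_add; [exact: der1_scale (der1_sq2 s) | exact: der1_cst].
  by apply: der1_eq hf; [move=> x; rewrite /phi; ring | rewrite /psi; ring].
have psiB : forall s, 0 <= s <= 1 -> `|psi s| <= Mb.
  move=> s hs; have := Hpsi s hs; rewrite psi0 subr0 => /le_trans; apply.
  case/andP: hs => s0 s1.
  have : 0 <= Mb by rewrite /Mb !mulr_ge0 ?exprn_ge0 ?enorm_ge0 ?powR_ge0.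
  nra.
have := L1 dphiP psiB (s := 1); rewrite ler01 lexx mulr1 => /(_ isT).
have -> : phi 0 = 0 by rewrite /phi p0; ring.
rewrite subr0 /phi p1 mul1r expr1n.
have -> : V z - V x0 - L0 - 1 / 2 * Q0 = V z - V x0 - (\sum_i h 0 i * DV x0 0 i + 2^-1 * Q0).
  rewrite /L0 (eq_bigr (fun i => h 0 i * DV x0 0 i)); last by move=> i _; rewrite mulrC.
  by rewrite mul1r; ring.
by [].
Qed.
End Taylor.

From mathcomp Require Import zify.
Local Notation o := (0%R : 'I_1).
Lemma ar1 a b j : (a <= b + j)%N /\ (b <= a + j)%N -> a = (b + (a + j - b) - j)%N.
Proof. lia. Qed.
Lemma ar2 a b j : (a <= b + j)%N /\ (b <= a + j)%N -> (a + j - b < (j + j).+1)%N.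
Proof. lia. Qed.
Lemma ar3 a (k : nat) j : (k < (j + j).+1)%N -> (a + k - j <= a + j)%N.
Proof. lia. Qed.
Section Chain.
Variables (R : realType) (d m : nat) (P : trans_kernel R d m) (U : 'rV[nat]_d -> 'cV[R]_m) (j : nat).
Hypotheses (P0 : forall x y, 0 <= P (U x) x y)
  (P1 : forall x, (\esum_(y in [set: 'rV[nat]_d]) (P (U x) x y)%:E)%E = 1%E)
  (Pj : jbound P U j).

Definition Sx (x : 'rV[nat]_d) : seq 'rV[nat]_d :=
  undup [seq \row_i ((x o i + k i) - j)%N | k : {ffun 'I_d -> 'I_((j + j).+1)} <- enum {ffun 'I_d -> 'I_((j + j).+1)}].

Lemma Sx_uniq x : uniq (Sx x). Proof. exact: undup_uniq. Qed.

Lemma Sx_mem (y x : 'rV[nat]_d) : (forall i, (y o i <= x o i + j) /\ (x o i <= y o i + j))%N -> y \in Sx x.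
Proof.
move=> h; rewrite mem_undup; apply/mapP.
exists [ffun i => inord (y 0 i + j - x 0 i) : 'I_((j + j).+1)]; first by rewrite mem_enum.
apply/matrixP => a i; rewrite (ord1 a) mxE ffunE inordK; have := h i; [exact: ar1 | exact: ar2].
Qed.

Lemma Sx_le (y x : 'rV[nat]_d) : y \in Sx x -> forall i, (y o i <= x o i + j)%N.
Proof.
rewrite mem_undup => /mapP [k _ ->] i; rewrite mxE; apply: ar3; exact: ltn_ord.
Qed.

Lemma coord_le (x y : 'rV[nat]_d) : enorm (emb R y - emb R x) <= j%:R ->
  forall i, (y o i <= x o i + j /\ x o i <= y o i + j)%N.
Proof.
move=> h i; have := le_trans (enorm_coord _ 0 i) h; rewrite !mxE ler_norml => /andP[a b].
split; first by rewrite -(ler_nat R) natrD; lra.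
by rewrite -(ler_nat R) natrD; lra.
Qed.

Lemma supp x y : P (U x) x y != 0 -> y \in Sx x.
Proof.
move=> hP; apply: Sx_mem; apply: coord_le; rewrite leNgt; apply/negP => hlt.
by move: hP; rewrite (Pj hlt) eqxx.
Qed.

Lemma esum_Sx x (a : 'rV[nat]_d -> \bar R) : (forall y, (0 <= a y)%E) ->
  (forall y, y \notin Sx x -> a y = 0%E) ->
  (\esum_(y in [set: 'rV[nat]_d]) a y)%E = (\sum_(y <- Sx x) a y)%E.
Proof.
move=> a0 aS.
have -> : (\esum_(y in [set: 'rV[nat]_d]) a y)%E = (\esum_(y in [set` Sx x]) a y)%E.
  rewrite [RHS]esum_mkcond; apply: eq_esum => y _.
  case: ifPn => // hy; apply: aS; apply/negP => hs; move/negP: hy; apply.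
  by rewrite in_setE.
rewrite esum_fset; [|exact: finite_seq|by move=> *; apply: a0].
symmetry; apply: fsbig_seq; exact: Sx_uniq.
Qed.

Lemma sumP1 x : \sum_(y <- Sx x) P (U x) x y = 1.
Proof.
have := P1 x; rewrite (@esum_Sx x).
- by rewrite sumEFin => -[].
- by move=> y; rewrite lee_fin.
- move=> y hy; congr (_%:E); apply/eqP; apply: contraNT hy; exact: supp.
Qed.

Fixpoint Er (t : nat) (g : 'rV[nat]_d -> R) (x : 'rV[nat]_d) : R :=
  match t with
  | 0 => g x
  | t'.+1 => \sum_(y <- Sx x) P (U x) x y * Er t' g y
  end.

Lemma ErD t g h x : Er t (fun y => g y + h y) x = Er t g x + Er t h x.
Proof.
elim: t x => [//|t IH] x /=; rewrite -big_split /=; apply: eq_bigr => y _.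
by rewrite IH mulrDr.
Qed.

Lemma ErZ t c g x : Er t (fun y => c * g y) x = c * Er t g x.
Proof.
elim: t x => [//|t IH] x /=; rewrite mulr_sumr; apply: eq_bigr => y _.
by rewrite IH mulrCA.
Qed.

Lemma ErB t g h x : Er t (fun y => g y - h y) x = Er t g x - Er t h x.
Proof.
rewrite (_ : (fun y => g y - h y) = (fun y => g y + (-1) * h y)); last first.
  by apply: funext => y; rewrite mulN1r.
by rewrite ErD ErZ mulN1r.
Qed.

Lemma Er_ext t g h x : (forall y, g y = h y) -> Er t g x = Er t h x.
Proof. by move=> gh; rewrite (_ : g = h) //; apply: funext. Qed.

Lemma Er_le t g h x : (forall y, g y <= h y) -> Er t g x <= Er t h x.
Proof.
move=> gh; elim: t x => [//|t IH] x /=; apply: ler_sum => y _.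
by apply: ler_wpM2l.
Qed.

Lemma Er_cst t c x : Er t (fun _ => c) x = c.
Proof.
elim: t x => [//|t IH] x /=.
under eq_bigr do rewrite IH; by rewrite -mulr_suml sumP1 mul1r.
Qed.

Lemma Er_norm t g x : `|Er t g x| <= Er t (fun y => `|g y|) x.
Proof.
elim: t x => [//|t IH] x /=; apply: le_trans (ler_norm_sum _ _ _) _.
apply: ler_sum => y _; rewrite normrM ger0_norm //; exact: ler_wpM2l.
Qed.

Lemma Er_shift t g x : Er t (Er 1 g) x = Er t.+1 g x.
Proof.
elim: t x => [//|t IH] x /=.
by apply: eq_bigr => y _; rewrite IH.
Qed.

Lemma Er_reach t (g : 'rV[nat]_d -> R) (M : R) (x : 'rV[nat]_d) : (forall y : 'rV[nat]_d, (forall i, (y o i <= x o i + t * j)%N) -> g y <= M) ->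
  Er t g x <= M.
Proof.
elim: t x => [|t IH] x hg /=.
  by apply: hg => i; rewrite mul0n addn0.
apply: le_trans (_ : \sum_(y <- Sx x) P (U x) x y * M <= M).
  rewrite big_seq_cond [X in _ <= X]big_seq_cond; apply: ler_sum => y /andP[yS _].
  apply: ler_wpM2l => //; apply: IH => z hz; apply: hg => i.
  have := hz i; have := Sx_le yS i; lia.
by rewrite -mulr_suml sumP1 mul1r.
Qed.

Lemma Et_ge0 (f : 'rV[nat]_d -> \bar R) t x : (forall y, (0 <= f y)%E) -> (0 <= Et P U f t x)%E.
Proof.
move=> f0; elim: t x => [//|t IH] x /=.
by apply: esum_ge0 => y _; apply: mule_ge0; rewrite ?lee_fin.
Qed.

Lemma Et_Er t g x : (forall y, 0 <= g y) -> Et P U (fun y => (g y)%:E) t x = (Er t g x)%:E.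
Proof.
move=> g0; elim: t x => [//|t IH] x /=.
have Er0 : forall t y, 0 <= Er t g y.
  by move=> t' y; rewrite -(Er_cst t' 0 y); apply: Er_le.
under eq_esum do rewrite IH.
rewrite (@esum_Sx x).
- by rewrite -sumEFin.
- by move=> y; apply: mule_ge0; rewrite lee_fin.
- move=> y hy; have -> : P (U x) x y = 0.
    by apply/eqP; apply: contraNT hy; exact: supp.
  by rewrite mul0e.
Qed.

Lemma Et_ge t (f : 'rV[nat]_d -> \bar R) (g : 'rV[nat]_d -> R) (c : R) x :
  (forall y, (0 <= f y)%E) -> 0 <= c -> (forall y, 0 <= g y) ->
  (forall y, ((g y)%:E <= c%:E * f y)%E) ->
  ((Er t g x)%:E <= c%:E * Et P U f t x)%E.
Proof.
move=> f0 c0 g0 gf; elim: t x => [|t IH] x /=; first exact: gf.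
rewrite -sumEFin.
apply: (@le_trans _ _ (\sum_(y <- Sx x) (P (U x) x y)%:E * (c%:E * Et P U f t y))%E).
  apply: lee_sum => y _; rewrite EFinM; apply: lee_wpmul2l; [by rewrite lee_fin|exact: IH].
rewrite (eq_bigr (fun y => c%:E * ((P (U x) x y)%:E * Et P U f t y))%E); last first.
  by move=> y _; rewrite muleCA.
rewrite -ge0_sume_distrr; last by move=> y _; apply: mule_ge0; rewrite ?lee_fin ?Et_ge0.
apply: lee_wpmul2l; first by rewrite lee_fin.
apply: esum_ge; exists [set` Sx x]; first by split; [exact: finite_seq|].
by rewrite fsbig_seq ?Sx_uniq.
Qed.

Lemma iterate (V e : 'rV[nat]_d -> R) (al : R) n x :
  (forall y, e y = V y - al * Er 1 V y) ->
  V x = \sum_(t < n) al ^+ t * Er t e x + al ^+ n * Er n V x.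
Proof.
move=> he; elim: n => [|n IH]; first by rewrite big_ord0 add0r expr0 mul1r.
rewrite big_ord_recr /= IH -addrA; congr (_ + _).
have -> : Er n V x = Er n e x + al * Er n.+1 V x.
  rewrite -Er_shift -ErZ -ErD; apply: Er_ext => y; rewrite he; ring.
rewrite -/(Er n.+1 V x) exprS; ring.
Qed.

End Chain.

Import numFieldNormedType.Exports.
Section Ser.
Variable R : realType.

Lemma nneseries_fin (a : nat -> R) : (forall n, 0 <= a n) ->
  (\sum_(0 <= t <oo) (a t)%:E < +oo)%E ->
  exists l : R, ((fun n => \sum_(t < n) a t) : R^nat) @ \oo --> l /\ (\sum_(0 <= t <oo) (a t)%:E)%E = l%:E.
Proof.
move=> a0 fin.
set S := (\sum_(0 <= t <oo) (a t)%:E)%E.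
have S0 : (0 <= S)%E by apply: nneseries_ge0 => n _ _; by rewrite lee_fin.
have Sfin : S \is a fin_num by rewrite ge0_fin_numE.
set u := fun n => \sum_(t < n) a t.
have uE : forall n, (u n)%:E = (\sum_(0 <= t < n) (a t)%:E)%E.
  by move=> n; rewrite /u -sumEFin big_mkord.
have ub : forall n, u n <= fine S.
  move=> n; rewrite -lee_fin fineK // uE; apply: nneseries_lim_ge => k _ _; by rewrite lee_fin.
have cv : cvgn u.
  apply: nondecreasing_is_cvgn.
    have -> : u = (fun n => \sum_(0 <= k < n | true) a k) by apply: funext => i0; rewrite /u big_mkord.
    exact: nondecreasing_series.
  by exists (fine S) => _ [n0 _ <-]; exact: ub.
exists (limn u); split => //.
rewrite /S -EFin_lim //; congr (limn _); apply: funext => n /=.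
by rewrite uE.
Qed.

Lemma lim_le_bound (u : R^nat) (l b : R) : u @ \oo --> l -> (forall n, u n <= b) -> l <= b.
Proof. by move=> hu hb; apply: (cvgr_to_le hu); apply: nearW. Qed.

Lemma sqrt_sum_le (d : nat) (a : 'I_d -> R) : (forall i, 0 <= a i) ->
  Num.sqrt (\sum_i a i ^+ 2) <= \sum_i a i.
Proof.
move=> a0; have S0 : 0 <= \sum_i a i by apply: sumr_ge0.
rewrite -(ger0_norm S0) -sqrtr_sqr ler_sqrt; last exact: sqr_ge0.
rewrite expr2 mulr_suml; apply: ler_sum => i _; rewrite expr2.
apply: ler_wpM2l => //; rewrite (bigD1 i) //= lerDl; exact: sumr_ge0.
Qed.

Lemma bernoulli (del : R) n : 0 <= del -> 1 + n%:R * del <= (1 + del) ^+ n.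
Proof.
move=> d0; elim: n => [|n IH]; first by rewrite mul0r addr0 expr0.
rewrite exprS; apply: le_trans (_ : (1 + del) * (1 + n%:R * del) <= _).
  have : 0 <= n%:R * del * del by rewrite mulr_ge0 ?mulr_ge0.
  rewrite -natr1 => h; lra.
by apply: ler_wpM2l => //; rewrite addr_ge0 ?ler01.
Qed.

Lemma tail0 (al K C : R) (mexp : nat) : 0 <= al < 1 -> 0 <= K -> 0 <= C ->
  ((fun n => al ^+ n * (C * (1 + (K * (n.+1)%:R) ^+ mexp))) : R^nat) @ \oo --> 0.
Proof.
case/andP => al0 al1 K0 C0.
set b := Num.max al 2^-1.
have h2 : 0 < (2 : R)^-1 by rewrite invr_gt0 ltr0n.
have b0 : 0 < b by rewrite lt_max h2 orbT.
have b1 : b < 1 by rewrite gt_max al1 invf_lt1 ?ltr0n // ltr1n.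
have alb : al <= b by rewrite le_max lexx.
set rho := b `^ (mexp.+1%:R)^-1.
have rho0 : 0 < rho by apply: powR_gt0.
have rhoE : rho ^+ mexp.+1 = b.
  by rewrite /rho -powR_mulrn ?powR_ge0 // -powRrM mulVf ?powRr1 ?pnatr_eq0 // ltW.
have rho1 : rho < 1.
  rewrite ltNge; apply/negP => h; have := exprn_ege1 mexp.+1 h; by rewrite rhoE leNgt b1.
set del := rho^-1 - 1.
have del0 : 0 < del by rewrite subr_gt0 invf_gt1.
set B := 1 + del^-1.
have di : del^-1 * del = 1 by rewrite mulVf // gt_eqF.
have di0 : 0 <= del^-1 by rewrite invr_ge0 ltW.
have hB : forall n, (n.+1)%:R * rho ^+ n <= B.
  move=> n; have bern := bernoulli n (ltW del0).
  have e1 : 1 + del = rho^-1 by rewrite /del addrC subrK.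
  rewrite e1 exprVn in bern.
  have rn0 : 0 < rho ^+ n by apply: exprn_gt0.
  have h1 : (1 + n%:R * del) * rho ^+ n <= 1.
    by have := ler_wpM2r (ltW rn0) bern; rewrite mulVf ?gt_eqF.
  have h3 : (n.+1)%:R <= B * (1 + n%:R * del).
    rewrite /B -natr1.
    have -> : (1 + del^-1) * (1 + n%:R * del) = 1 + del^-1 + n%:R * (del^-1 * del) + n%:R * del by ring.
    rewrite di mulr1; have : 0 <= n%:R * del by rewrite mulr_ge0 ?ler0n ?ltW.
    lra.
  apply: le_trans (_ : B * (1 + n%:R * del) * rho ^+ n <= B).
    by apply: ler_wpM2r; [exact: ltW|].
  rewrite -mulrA -{2}(mulr1 B); apply: ler_wpM2l => //.
  by rewrite /B addr_ge0 ?ler01.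
set D := C * (1 + K ^+ mexp * B ^+ mexp).
have hD : ((fun n => D * rho ^+ n) : R^nat) @ \oo --> 0.
  have hr : `|rho| < 1 by rewrite ger0_norm ?ltW.
  have := cvgMl_tmp (a := D) (cvg_expr hr); rewrite mulr0; apply.
apply: (squeeze_cvgr _ (cvg_cst _) hD); apply: nearW => n /=.
have x0 : 0 <= rho ^+ n by rewrite exprn_ge0 ?ltW.
have x1 : rho ^+ n <= 1 by rewrite exprn_ile1 ?ltW.
have aln0 : 0 <= al ^+ n by rewrite exprn_ge0.
apply/andP; split.
  by rewrite mulr_ge0 // mulr_ge0 // addr_ge0 ?ler01 // exprn_ge0 // mulr_ge0.
have aln : al ^+ n <= (rho ^+ n) ^+ mexp.+1.
  rewrite -exprM mulnC exprM rhoE; apply: lerXn2r => //; rewrite nnegrE ltW //.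
have e2 : (rho ^+ n) ^+ mexp.+1 * (1 + (K * (n.+1)%:R) ^+ mexp) =
   rho ^+ n * ((rho ^+ n) ^+ mexp + K ^+ mexp * ((n.+1)%:R * rho ^+ n) ^+ mexp).
  by rewrite !exprMn exprS; ring.
have p1 : (rho ^+ n) ^+ mexp <= 1 by rewrite exprn_ile1.
have p2 : ((n.+1)%:R * rho ^+ n) ^+ mexp <= B ^+ mexp.
  by apply: lerXn2r; rewrite ?nnegrE ?mulr_ge0 ?ler0n // (le_trans _ (hB n)) // mulr_ge0.
have Km : 0 <= K ^+ mexp by rewrite exprn_ge0.
have q0 : 0 <= 1 + (K * (n.+1)%:R) ^+ mexp by rewrite addr_ge0 ?ler01 // exprn_ge0 // mulr_ge0.
have s1 : al ^+ n * (1 + (K * (n.+1)%:R) ^+ mexp) <= rho ^+ n * (1 + K ^+ mexp * B ^+ mexp).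
  apply: le_trans (_ : (rho ^+ n) ^+ mexp.+1 * (1 + (K * (n.+1)%:R) ^+ mexp) <= _).
    exact: ler_wpM2r.
  rewrite e2; apply: ler_wpM2l => //; apply: lerD => //; exact: ler_wpM2l.
have -> : al ^+ n * (C * (1 + (K * (n.+1)%:R) ^+ mexp)) = C * (al ^+ n * (1 + (K * (n.+1)%:R) ^+ mexp)) by ring.
have -> : D * rho ^+ n = C * (rho ^+ n * (1 + K ^+ mexp * B ^+ mexp)) by rewrite /D; ring.
exact: ler_wpM2l.
Qed.

End Ser.

Section Misc.
Variable R : realType.
Lemma posneg (a : R) : Num.max a 0 - Num.max (- a) 0 = a.
Proof.
by case: (ler0P a) => h; case: (ler0P (- a)) => h'; lra.
Qed.
Lemma pos_le_abs (a : R) : Num.max a 0 <= `|a|.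
Proof. by rewrite ge_max ler_norm normr_ge0. Qed.
Lemma neg_le_abs (a : R) : Num.max (- a) 0 <= `|a|.
Proof. by rewrite ge_max -normrN ler_norm normr_ge0. Qed.
End Misc.

Section Chain2.
Variables (R : realType) (d m : nat) (P : trans_kernel R d m) (U : 'rV[nat]_d -> 'cV[R]_m) (j : nat).
Hypotheses (P0 : forall x y, 0 <= P (U x) x y)
  (P1 : forall x, (\esum_(y in [set: 'rV[nat]_d]) (P (U x) x y)%:E)%E = 1%E)
  (Pj : jbound P U j).

Lemma ssum_Sx x (f : 'rV[nat]_d -> R) : (forall z, z \notin Sx j x -> f z = 0) ->
  ssum f = (\sum_(z <- Sx j x) f z)%:E.
Proof.
move=> hf; rewrite /ssum.
rewrite (@esum_Sx _ _ j x); last 2 first.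
- by move=> z; rewrite lee_fin le_max lexx orbT.
- by move=> z hz; rewrite hf // maxxx.
rewrite (@esum_Sx _ _ j x); last 2 first.
- by move=> z; rewrite lee_fin le_max lexx orbT.
- by move=> z hz; rewrite hf // oppr0 maxxx.
rewrite !sumEFin -EFinB -sumrB; congr (_%:E); apply: eq_bigr => z _; exact: posneg.
Qed.

Lemma VU_real (r : 'cV[R]_m -> 'rV[R]_d -> R) (al : R) x : 0 <= al ->
  (Edisc P U al (fun y => (`|r (U y) (emb R y)|)%:E) x < +oo)%E ->
  exists Vr : R, VU P r U al x = Vr%:E /\
    ((fun n => \sum_(t < n) al ^+ t * Er P U j t (fun y => r (U y) (emb R y)) x) : R^nat) @ \oo --> Vr.
Proof.
move=> al0 hfin.
set rr := fun y => r (U y) (emb R y).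
have Ed : forall g, (forall y, 0 <= g y) ->
   Edisc P U al (fun y => (g y)%:E) x = (\sum_(0 <= t <oo) (al ^+ t * Er P U j t g x)%:E)%E.
  move=> g g0; rewrite /Edisc; apply: eq_eseriesr => t _.
  by rewrite (Et_Er P0 P1 Pj) // EFinM.
have Er0 : forall g t, (forall y, 0 <= g y) -> 0 <= al ^+ t * Er P U j t g x.
  move=> g t g0; apply: mulr_ge0; first exact: exprn_ge0.
  by rewrite -(Er_cst P0 P1 Pj t 0 x); apply: (Er_le j P0).
have ab0 : forall y, 0 <= `|rr y| by move=> y; exact: normr_ge0.
have pos0 : forall y, 0 <= Num.max (rr y) 0 by move=> y; rewrite le_max lexx orbT.
have neg0 : forall y, 0 <= Num.max (- rr y) 0 by move=> y; rewrite le_max lexx orbT.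
have finab := hfin; rewrite (Ed _ ab0) in finab.
have finpos : (\sum_(0 <= t <oo) (al ^+ t * Er P U j t (fun y => Num.max (rr y) 0) x)%:E < +oo)%E.
  apply: le_lt_trans finab; apply: lee_nneseries => [t _ _|t _]; first by rewrite lee_fin Er0.
  rewrite lee_fin; apply: ler_wpM2l; first exact: exprn_ge0.
  apply: (Er_le j P0) => y; exact: pos_le_abs.
have finneg : (\sum_(0 <= t <oo) (al ^+ t * Er P U j t (fun y => Num.max (- rr y) 0) x)%:E < +oo)%E.
  apply: le_lt_trans finab; apply: lee_nneseries => [t _ _|t _]; first by rewrite lee_fin Er0.
  rewrite lee_fin; apply: ler_wpM2l; first exact: exprn_ge0.
  apply: (Er_le j P0) => y; exact: neg_le_abs.
have [lp [cp ep]] := nneseries_fin (fun t => Er0 _ t pos0) finpos.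
have [ln [cn en]] := nneseries_fin (fun t => Er0 _ t neg0) finneg.
exists (lp - ln); split.
  by rewrite /VU (Ed _ pos0) (Ed _ neg0) ep en EFinB.
pose f1 := fun n => \sum_(t < n) al ^+ t * Er P U j t (fun y => Num.max (rr y) 0) x.
pose f2 := fun n => \sum_(t < n) al ^+ t * Er P U j t (fun y => Num.max (- rr y) 0) x.
have H : ((f1 - f2) : R^nat) @ \oo --> lp - ln by apply: cvgB.
suff -> : (fun n => \sum_(t < n) al ^+ t * Er P U j t rr x) = f1 - f2 by [].
apply: funext => n; have -> : (f1 - f2) n = f1 n - f2 n by [].
rewrite /f1 /f2 -sumrB; apply: eq_bigr => t _; rewrite -mulrBr -(ErB P U j).
congr (_ * _); apply: Er_ext => y; exact/esym/posneg.
Qed.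

End Chain2.

Section Tau.
Variables (R : realType) (d : nat) (V : 'rV[R]_d -> R) (DV : 'rV[R]_d -> 'rV[R]_d)
  (D2V : 'rV[R]_d -> 'M[R]_d).
Hypothesis hV : forall x, orthant x -> deriv_within (@orthant R d)
  (fun y => (V y)%:M : 'M[R]_1) x (fun h => (\sum_i DV x 0 i * h 0 i)%:M).
Hypothesis hDV : forall x, orthant x -> deriv_within (@orthant R d) DV x (fun h => h *m D2V x).

Lemma holder_ge0 (beta : R) (Om : set 'rV[R]_d) : (0 <= holder beta D2V Om)%E.
Proof. by apply: ereal_sup_ubound; left. Qed.

Lemma tau_bound (y0 z0 : 'rV[R]_d) (jr beta : R) : orthant y0 -> orthant z0 -> 0 <= beta ->
  enorm (z0 - y0) <= jr ->
  ((`|V z0 - V y0 - (\sum_i (z0 - y0) 0 i * DV y0 0 i +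
      2^-1 * \sum_i \sum_k (z0 - y0) 0 k * (z0 - y0) 0 i * D2V y0 k i)|)%:E
   <= (jr `^ (2 + beta))%:E * holder beta D2V (cball y0 jr))%E.
Proof.
move=> oy oz b0 hj.
set H := holder beta D2V (cball y0 jr).
have H0 : (0 <= H)%E := holder_ge0 _ _.
set e := enorm (z0 - y0).
have e0 : 0 <= e := enorm_ge0 _.
have pj0 : 0 <= jr `^ (2 + beta) := powR_ge0 _ _.
have [eq0|epos] := eqVneq e 0.
  have zy : z0 - y0 = 0 := enorm_eq0 eq0.
  rewrite zy.
  have -> : V z0 - V y0 = 0 by rewrite (_ : z0 = y0) ?subrr //; apply/eqP; rewrite -subr_eq0 zy.
  rewrite big1; last by move=> i _; rewrite mxE mul0r.
  rewrite big1; last by move=> i _; rewrite big1 // => k _; rewrite !mxE !mul0r.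
  rewrite mulr0 addr0 subr0 normr0; apply: mule_ge0 => //; by rewrite lee_fin.
have ep : 0 < e by rewrite lt0r epos e0.
have jp : 0 < jr by apply: lt_le_trans hj.
have [Hfin|Hinf] := boolP (H \is a fin_num); last first.
  have -> : H = (+oo)%E by move: Hinf; rewrite ge0_fin_numE // -leNgt leye_eq => /eqP.
  by rewrite gt0_muley ?leey // lte_fin powR_gt0.
set Hr := fine H.
have HE : H = Hr%:E by rewrite /Hr fineK.
have Hr0 : 0 <= Hr by rewrite -lee_fin -HE.
have hH : forall w, orthant w -> enorm (w - y0) <= e ->
    enorm (D2V w - D2V y0) <= Hr * enorm (w - y0) `^ beta.
  move=> w ow hw.
  have [wy|wy] := eqVneq w y0.
    by rewrite wy !subrr enorm0 mulr_ge0 ?powR_ge0.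
  have wp : 0 < enorm (w - y0).
    rewrite lt0r enorm_ge0 andbT; apply/eqP => /enorm_eq0 /eqP; rewrite subr_eq0.
    by apply/negP.
  have pw : 0 < enorm (w - y0) `^ beta by apply: powR_gt0.
  have : ((enorm (D2V w - D2V y0) / enorm (w - y0) `^ beta)%:E <= H)%E.
    apply: ereal_sup_ubound; right; exists w, y0; split => //.
    - by split => //; exact: le_trans hw hj.
    - by split => //; rewrite subrr enorm0; exact: le_trans e0 hj.
  by rewrite HE lee_fin ler_pdivrMr.
have hT := taylor hV hDV oy oz b0 Hr0 hH.
rewrite HE -EFinM lee_fin; apply: le_trans hT _.
have h2b : 0 < 2 + beta by lra.
have -> : Hr * e ^+ 2 * e `^ beta = Hr * e `^ (2 + beta).
  rewrite powRD; last by rewrite gt_eqF.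
  by rewrite -powR_mulrn // mulrA.
rewrite mulrC; apply: ler_wpM2r => //.
apply: (ge0_ler_powR (ltW h2b)) => //; rewrite nnegrE // ltW //.
Qed.
End Tau.

Section Chain3.
Variables (R : realType) (d m : nat) (P : trans_kernel R d m) (U : 'rV[nat]_d -> 'cV[R]_m) (j : nat).
Hypotheses (P0 : forall x y, 0 <= P (U x) x y)
  (P1 : forall x, (\esum_(y in [set: 'rV[nat]_d]) (P (U x) x y)%:E)%E = 1%E)
  (Pj : jbound P U j).

Lemma outP y z : z \notin Sx j y -> P (U y) y z = 0.
Proof. by move=> hz; apply/eqP; apply: (contraNT _ hz) => hP; exact: (supp Pj hP). Qed.

Lemma orth_emb (z : 'rV[nat]_d) : orthant (emb R z).
Proof. by move=> i; rewrite mxE ler0n. Qed.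

Variables (V : 'rV[R]_d -> R) (DV : 'rV[R]_d -> 'rV[R]_d) (D2V : 'rV[R]_d -> 'M[R]_d).
Hypothesis hV : forall x, orthant x -> deriv_within (@orthant R d)
  (fun y => (V y)%:M : 'M[R]_1) x (fun h => (\sum_i DV x 0 i * h 0 i)%:M).
Hypothesis hDV : forall x, orthant x -> deriv_within (@orthant R d) DV x (fun h => h *m D2V x).
Variables (mu : 'cV[R]_m -> 'rV[R]_d -> 'rV[R]_d) (sig2 : 'cV[R]_m -> 'rV[R]_d -> 'M[R]_d).
Hypothesis hmuU : forall y i, (mu (U y) (emb R y) 0 i)%:E =
  ssum (fun z => P (U y) y z * (emb R z 0 i - emb R y 0 i)).
Hypothesis hsigU : forall y i k, (sig2 (U y) (emb R y) i k)%:E =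
  ssum (fun z => P (U y) y z * ((emb R z 0 i - emb R y 0 i) * (emb R z 0 k - emb R y 0 k))).

Lemma T_bound (beta : R) y : 0 <= beta ->
  ((`|Er P U j 1 (fun z => V (emb R z)) y - V (emb R y) -
       gen (mu (U y) (emb R y)) (sig2 (U y) (emb R y)) (DV (emb R y)) (D2V (emb R y))|)%:E
   <= (j%:R `^ (2 + beta))%:E * holder beta D2V (cball (emb R y) j%:R))%E.
Proof.
move=> b0.
set S := Sx j y; set ey := emb R y.
have hmuS : forall i, mu (U y) ey 0 i = \sum_(z <- S) P (U y) y z * (emb R z 0 i - ey 0 i).
  move=> i; have := hmuU y i; rewrite (@ssum_Sx _ _ j y) => [[]//|z hz].
  by rewrite outP // mul0r.
have hsigS : forall i k, sig2 (U y) ey i k =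
    \sum_(z <- S) P (U y) y z * ((emb R z 0 i - ey 0 i) * (emb R z 0 k - ey 0 k)).
  move=> i k; have := hsigU y i k; rewrite (@ssum_Sx _ _ j y) => [[]//|z hz].
  by rewrite outP // mul0r.
have hE : forall z i, (emb R z - ey) 0 i = emb R z 0 i - ey 0 i by move=> z i; rewrite !mxE.
have E1 : \sum_i mu (U y) ey 0 i * DV ey 0 i =
    \sum_(z <- S) P (U y) y z * \sum_i (emb R z - ey) 0 i * DV ey 0 i.
  rewrite (eq_bigr (fun i => \sum_(z <- S) P (U y) y z * (emb R z 0 i - ey 0 i) * DV ey 0 i));
    last by move=> i _; rewrite hmuS mulr_suml.
  rewrite exchange_big /=; apply: eq_bigr => z _; rewrite mulr_sumr; apply: eq_bigr => i _.
  by rewrite hE mulrA.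
have E2 : \tr ((sig2 (U y) ey)^T *m D2V ey) =
    \sum_(z <- S) P (U y) y z * \sum_i \sum_k (emb R z - ey) 0 k * (emb R z - ey) 0 i * D2V ey k i.
  rewrite /mxtrace.
  rewrite (eq_bigr (fun i => \sum_k \sum_(z <- S) P (U y) y z *
      ((emb R z 0 k - ey 0 k) * (emb R z 0 i - ey 0 i)) * D2V ey k i)); last first.
    move=> i _; rewrite mxE; apply: eq_bigr => k _; rewrite [in LHS]mxE hsigS mulr_suml.
    by [].
  rewrite (eq_bigr (fun i => \sum_(z <- S) \sum_k P (U y) y z *
      ((emb R z 0 k - ey 0 k) * (emb R z 0 i - ey 0 i)) * D2V ey k i)); last first.
    by move=> i _; rewrite exchange_big.
  rewrite exchange_big /=; apply: eq_bigr => z _; rewrite mulr_sumr; apply: eq_bigr => i _.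
  rewrite mulr_sumr; apply: eq_bigr => k _; rewrite !hE; ring.
pose tau z := V (emb R z) - V ey - (\sum_i (emb R z - ey) 0 i * DV ey 0 i +
      2^-1 * \sum_i \sum_k (emb R z - ey) 0 k * (emb R z - ey) 0 i * D2V ey k i).
have TE : Er P U j 1 (fun z => V (emb R z)) y - V ey -
    gen (mu (U y) ey) (sig2 (U y) ey) (DV ey) (D2V ey) = \sum_(z <- S) P (U y) y z * tau z.
  rewrite /gen E1 E2 /=.
  have -> : V ey = \sum_(z <- S) P (U y) y z * V ey by rewrite -mulr_suml (sumP1 P0 P1 Pj) mul1r.
  rewrite mulr_sumr -big_split /= -!sumrB; apply: eq_bigr => z _; rewrite /tau; ring.
rewrite TE.
apply: (@le_trans _ _ ((\sum_(z <- S) P (U y) y z * `|tau z|)%:E)).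
  rewrite lee_fin; apply: le_trans (ler_norm_sum _ _ _) _.
  by apply: ler_sum => z _; rewrite normrM ger0_norm.
rewrite -sumEFin.
apply: (@le_trans _ _ (\sum_(z <- S) (P (U y) y z)%:E *
   ((j%:R `^ (2 + beta))%:E * holder beta D2V (cball ey j%:R)))%E).
  apply: lee_sum => z _.
  have [Pz0|Pzn] := eqVneq (P (U y) y z) 0.
    by rewrite Pz0 mul0r mul0e.
  have hz : enorm (emb R z - ey) <= j%:R.
    rewrite leNgt; apply/negP => hlt; move: Pzn; by rewrite (Pj hlt) eqxx.
  rewrite EFinM; apply: lee_wpmul2l; first by rewrite lee_fin.
  exact: (tau_bound hV hDV (orth_emb y) (orth_emb z) b0 hz).
rewrite -ge0_sume_distrl; last by move=> z _; rewrite lee_fin.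
by rewrite sumEFin (sumP1 P0 P1 Pj) mul1e.
Qed.

End Chain3.

Section Chain4.
Variables (R : realType) (d m : nat) (P : trans_kernel R d m) (U : 'rV[nat]_d -> 'cV[R]_m) (j : nat).
Hypotheses (P0 : forall x y, 0 <= P (U x) x y)
  (P1 : forall x, (\esum_(y in [set: 'rV[nat]_d]) (P (U x) x y)%:E)%E = 1%E)
  (Pj : jbound P U j).

Lemma Er_ge0 t g x : (forall y, 0 <= g y) -> 0 <= Er P U j t g x.
Proof. by move=> g0; rewrite -(Er_cst P0 P1 Pj t 0 x); apply: (Er_le j P0). Qed.

Lemma Edisc_ge0 al (H : 'rV[nat]_d -> \bar R) x : 0 <= al -> (forall y, (0 <= H y)%E) ->
  (0 <= Edisc P U al H x)%E.
Proof.
move=> al0 H0; apply: nneseries_ge0 => t _ _; apply: mule_ge0.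
  by rewrite lee_fin exprn_ge0.
exact: (Et_ge0 P0).
Qed.

Lemma verif (Vl rr T : 'rV[nat]_d -> R) (al c : R) (H : 'rV[nat]_d -> \bar R) x (Vr : R) :
  0 <= al <= 1 -> 0 <= c -> (forall y, (0 <= H y)%E) ->
  (forall y, ((`|T y|)%:E <= c%:E * H y)%E) ->
  (forall y, rr y - al * T y <= Vl y - al * Er P U j 1 Vl y) ->
  ((fun n => al ^+ n * Er P U j n Vl x) : R^nat) @ \oo --> 0 ->
  ((fun n => \sum_(t < n) al ^+ t * Er P U j t rr x) : R^nat) @ \oo --> Vr ->
  ((Vr - Vl x)%:E <= c%:E * Edisc P U al H x)%E.
Proof.
move=> /andP[al0 al1] c0 H0 hT he htail hs.
pose e := fun y => Vl y - al * Er P U j 1 Vl y.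
have it : forall n, Vl x = \sum_(t < n) al ^+ t * Er P U j t e x + al ^+ n * Er P U j n Vl x.
  by move=> n; apply: iterate.
have aT0 : forall y, 0 <= `|T y| by move=> y; exact: normr_ge0.
have An : forall n, (\sum_(t < n) al ^+ t * Er P U j t rr x) - Vl x + al ^+ n * Er P U j n Vl x
    <= \sum_(t < n) al ^+ t * Er P U j t (fun y => `|T y|) x.
  move=> n; rewrite [X in _ - X + _](it n).
  suff : \sum_(t < n) al ^+ t * Er P U j t rr x - \sum_(t < n) al ^+ t * Er P U j t e x
      <= \sum_(t < n) al ^+ t * Er P U j t (fun y => `|T y|) x by lra.
  rewrite -sumrB; apply: ler_sum => t _; rewrite -mulrBr; apply: ler_wpM2l.
    exact: exprn_ge0.
  have h1 : Er P U j t rr x <= Er P U j t (fun y => e y + `|T y|) x.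
    apply: (Er_le j P0) => y; have := he y; rewrite /e.
    have : al * T y <= `|T y|.
      apply: le_trans (ler_norm _) _; rewrite normrM ger0_norm //.
      by rewrite ler_piMl.
    lra.
  by rewrite (ErD P U j) in h1; lra.
have Bn : forall n, ((\sum_(t < n) al ^+ t * Er P U j t (fun y => `|T y|) x)%:E
    <= c%:E * Edisc P U al H x)%E.
  move=> n; rewrite -sumEFin.
  apply: (@le_trans _ _ (\sum_(t < n) (al ^+ t)%:E * (c%:E * Et P U H t x))%E).
    apply: lee_sum => t _; rewrite EFinM; apply: lee_wpmul2l; first by rewrite lee_fin exprn_ge0.
    exact: (Et_ge j P0).
  rewrite (eq_bigr (fun t : 'I_n => c%:E * ((al ^+ t)%:E * Et P U H t x))%E); last first.
    by move=> t _; rewrite muleCA.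
  rewrite -ge0_sume_distrr; last first.
    by move=> t _; apply: mule_ge0; [rewrite lee_fin exprn_ge0|exact: (Et_ge0 P0)].
  apply: lee_wpmul2l; first by rewrite lee_fin.
  rewrite /Edisc -(big_mkord xpredT (fun t => ((al ^+ t)%:E * Et P U H t x)%E)).
  apply: nneseries_lim_ge => t _ _; apply: mule_ge0; [rewrite lee_fin exprn_ge0|exact: (Et_ge0 P0)] => //.
have X0 : (0 <= c%:E * Edisc P U al H x)%E.
  by apply: mule_ge0; [rewrite lee_fin|exact: Edisc_ge0].
have [Xfin|Xinf] := boolP ((c%:E * Edisc P U al H x)%E \is a fin_num); last first.
  have -> : (c%:E * Edisc P U al H x)%E = (+oo)%E.
    by move: Xinf; rewrite ge0_fin_numE // -leNgt leye_eq => /eqP.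
  exact: leey.
rewrite -(fineK Xfin) lee_fin.
set a := fine _.
have hu : ((fun n => (\sum_(t < n) al ^+ t * Er P U j t rr x - Vl x) + al ^+ n * Er P U j n Vl x)
   : R^nat) @ \oo --> Vr - Vl x + 0.
  apply: cvgD => //; apply: cvgB => //; exact: cvg_cst.
rewrite -(addr0 (Vr - Vl x)); apply: (lim_le_bound hu) => n.
apply: le_trans (An n) _; rewrite -lee_fin /a fineK //; exact: Bn.
Qed.

Lemma tail_Er (Vl : 'rV[nat]_d -> R) (al Gam : R) (mexp : nat) x : 0 <= al < 1 -> 0 <= Gam ->
  (forall y, `|Vl y| <= Gam * (1 + enorm (emb R y) ^+ mexp)) ->
  ((fun n => al ^+ n * Er P U j n Vl x) : R^nat) @ \oo --> 0.
Proof.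
move=> /andP[al0 al1] G0 hg.
set X := \sum_i ((x 0 i)%:R : R).
have X0 : 0 <= X by apply: sumr_ge0 => i _; exact: ler0n.
set K := X + d%:R * j%:R.
have K0 : 0 <= K by rewrite addr_ge0 // mulr_ge0.
have bound : forall n, `|al ^+ n * Er P U j n Vl x| <=
    al ^+ n * (Gam * (1 + (K * n.+1%:R) ^+ mexp)).
  move=> n; rewrite normrM ger0_norm ?exprn_ge0 //; apply: ler_wpM2l; first exact: exprn_ge0.
  apply: le_trans (Er_norm j P0 n Vl x) _.
  apply: (Er_reach P0 P1 Pj) => y hy.
  apply: le_trans (hg y) _; apply: ler_wpM2l => //; rewrite lerD2l.
  apply: lerXn2r; rewrite ?nnegrE ?enorm_ge0 ?mulr_ge0 //.
  rewrite enorm_rowE.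
  have : Num.sqrt (\sum_i (emb R y) 0 i ^+ 2) <= \sum_i (emb R y) 0 i.
    by apply: sqrt_sum_le => i; rewrite mxE ler0n.
  move/le_trans; apply.
  have : \sum_i (emb R y) 0 i <= \sum_i ((x 0 i)%:R + n%:R * j%:R).
    apply: ler_sum => i _; rewrite mxE -natrM -natrD ler_nat; exact: hy i.
  move/le_trans; apply.
  rewrite big_split /= sumr_const card_ord -/X -mulr_natr.
  rewrite /K -natr1.
  have : 0 <= n%:R * j%:R * d%:R :> R by rewrite !mulr_ge0.
  have : 0 <= (n%:R : R) by [].
  have : 0 <= (j%:R : R) by [].
  have : 0 <= (d%:R : R) by [].
  nra.
have hup := tail0 mexp (al:=al) (K:=K) (C:=Gam) ltac:(by rewrite al0 al1) K0 G0.
have hlow : ((fun n => - (al ^+ n * (Gam * (1 + (K * n.+1%:R) ^+ mexp)))) : R^nat) @ \oo --> 0.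
  by rewrite -oppr0; apply: cvgN.
apply: (squeeze_cvgr _ hlow hup); apply: nearW => n.
by have := bound n; rewrite ler_norml.
Qed.

End Chain4.

Unset Implicit Arguments.
Theorem theorem1 (R : realType) (d m k : nat)
  (Dset : set 'cV[R]_m) (A : 'M[R]_(k, m)) (b : 'rV[R]_d -> 'cV[R]_k)
  (r : 'cV[R]_m -> 'rV[R]_d -> R)
  (mu : 'cV[R]_m -> 'rV[R]_d -> 'rV[R]_d)
  (sig2 : 'cV[R]_m -> 'rV[R]_d -> 'M[R]_d)
  (P : trans_kernel R d m) (alpha : R)
  (Ustar : 'rV[nat]_d -> 'cV[R]_m)
  (Uhat : 'rV[R]_d -> 'cV[R]_m) (Vhat : 'rV[R]_d -> R)
  (DV : 'rV[R]_d -> 'rV[R]_d) (D2V : 'rV[R]_d -> 'M[R]_d)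
  (beta : R) (jh js : nat) :
  (* standing assumptions on the controlled chain *)
  countable_discrete Dset ->
  (forall x u, adm Dset A b (emb R x) u ->
     (forall y, 0 <= P u x y) /\ (\esum_(y in [set: 'rV[nat]_d]) (P u x y)%:E)%E = 1%E) ->
  (forall x u i, adm Dset A b (emb R x) u ->
     summable_st (fun y => P u x y * (emb R y 0 i - emb R x 0 i)) /\
     (mu u (emb R x) 0 i)%:E = ssum (fun y => P u x y * (emb R y 0 i - emb R x 0 i))) ->
  (forall x u i j, adm Dset A b (emb R x) u ->
     summable_st (fun y => P u x y * ((emb R y 0 i - emb R x 0 i) * (emb R y 0 j - emb R x 0 j))) /\
     (sig2 u (emb R x) i j)%:E =
       ssum (fun y => P u x y * ((emb R y 0 i - emb R x 0 i) * (emb R y 0 j - emb R x 0 j)))) ->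
  0 < alpha < 1 ->
  (* V^alpha_U is well defined (finite) for every stationary policy *)
  (forall U, policy Dset A b U -> forall x,
     (Edisc P U alpha (fun y => (`| r (U y) (emb R y) |)%:E) x < +oo)%E) ->
  (* U_* is an optimal stationary policy, V_* := V^alpha_{U_*} satisfies Bellman *)
  policy Dset A b Ustar ->
  (forall U, policy Dset A b U -> forall x, (VU P r U alpha x <= VU P r Ustar alpha x)%E) ->
  (forall x u, adm Dset A b (emb R x) u ->
     ((r u (emb R x))%:E + alpha%:E * ssum (fun y => (P u x y * fine (VU P r Ustar alpha y))%R)
        <= VU P r Ustar alpha x)%E) ->
  (* (Uhat, Vhat) solves the Taylored control problem *)
  0 < beta < 1 ->
  C2beta beta Vhat DV D2V ->
  (forall x, orthant x ->
     [/\ adm Dset A b x (Uhat x),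
         r (Uhat x) x + alpha * gen (mu (Uhat x) x) (sig2 (Uhat x) x) (DV x) (D2V x)
           - (1 - alpha) * Vhat x = 0
       & forall u, adm Dset A b x u ->
         r u x + alpha * gen (mu u x) (sig2 u x) (DV x) (D2V x) - (1 - alpha) * Vhat x <= 0]) ->
  (* finite jump sizes *)
  jump_size P (fun x => Uhat (emb R x)) jh ->
  jump_size P Ustar js ->
  (* polynomial growth *)
  (exists (mexp : nat) (Gam : R), forall x, orthant x ->
     `| Vhat x | <= Gam * (1 + enorm x ^+ mexp)) ->
  forall x : 'rV[nat]_d,
    (maxe `| (Vhat (emb R x))%:E - VU P r Ustar alpha x |
          `| VU P r (fun y => Uhat (emb R y)) alpha x - VU P r Ustar alpha x |
     <= (Num.max (jh%:R `^ (2 + beta)) (js%:R `^ (2 + beta)))%:E *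
        (Edisc P (fun y => Uhat (emb R y)) alpha
           (fun y => holder beta D2V (cball (emb R y) jh%:R)) x
         + Edisc P Ustar alpha
           (fun y => holder beta D2V (cball (emb R y) js%:R)) x))%E.
Proof.
move=> _ hP hmu hsig hal hfin pols hopt _ hbeta hC2 hHJB hjh hjs hgrowth x.
case/andP: hal => al0 al1; case/andP: hbeta => b0 b1.
have al01 : 0 <= alpha <= 1 by rewrite (ltW al0) (ltW al1).
have al01' : 0 <= alpha < 1 by rewrite (ltW al0) al1.
have b0' : 0 <= beta := ltW b0.
case: hC2 => hder _.
have hV := fun x ox => (hder x ox).1.
have hDV := fun x ox => (hder x ox).2.1.
set Uh := fun y => Uhat (emb R y).
have polh : policy Dset A b Uh by move=> y; case: (hHJB _ (orth_emb R y)).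
have P0h : forall x y, 0 <= P (Uh x) x y := fun x y => (hP x (Uh x) (polh x)).1 y.
have P1h := fun x => (hP x (Uh x) (polh x)).2.
have Pjh := hjh.1.
have P0s : forall x y, 0 <= P (Ustar x) x y := fun x y => (hP x (Ustar x) (pols x)).1 y.
have P1s := fun x => (hP x (Ustar x) (pols x)).2.
have Pjs := hjs.1.
have hmuh := fun y i => (hmu y (Uh y) i (polh y)).2.
have hsigh := fun y i k => (hsig y (Uh y) i k (polh y)).2.
have hmus := fun y i => (hmu y (Ustar y) i (pols y)).2.
have hsigs := fun y i k => (hsig y (Ustar y) i k (pols y)).2.
have [mexp [Gam hG]] := hgrowth.
have G0 : 0 <= Gam.
  have o0 : orthant (0 : 'rV[R]_d) by move=> i; rewrite mxE.
  have := hG 0 o0; rewrite enorm0 => h.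
  have p : 0 < 1 + (0 : R) ^+ mexp by rewrite ltr_pwDl ?ltr01 // exprn_ge0.
  by rewrite -(pmulr_lge0 _ p); apply: le_trans h.
set Vl := fun y => Vhat (emb R y).
have hgl : forall y, `|Vl y| <= Gam * (1 + enorm (emb R y) ^+ mexp) := fun y => hG _ (orth_emb R y).
have hgl' : forall y, `|- Vl y| <= Gam * (1 + enorm (emb R y) ^+ mexp).
  by move=> y; rewrite normrN.
set c := Num.max (jh%:R `^ (2 + beta)) (js%:R `^ (2 + beta)).
have c0 : 0 <= c by rewrite le_max powR_ge0.
set Hh := fun y => holder beta D2V (cball (emb R y) jh%:R).
set Hs := fun y => holder beta D2V (cball (emb R y) js%:R).
have Hh0 : forall y, (0 <= Hh y)%E by move=> y; exact: holder_ge0.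
have Hs0 : forall y, (0 <= Hs y)%E by move=> y; exact: holder_ge0.
set Th := fun y => Er P Uh jh 1 Vl y - Vl y -
   gen (mu (Uh y) (emb R y)) (sig2 (Uh y) (emb R y)) (DV (emb R y)) (D2V (emb R y)).
set Ts := fun y => Er P Ustar js 1 Vl y - Vl y -
   gen (mu (Ustar y) (emb R y)) (sig2 (Ustar y) (emb R y)) (DV (emb R y)) (D2V (emb R y)).
have ThC : forall y, ((`|Th y|)%:E <= c%:E * Hh y)%E.
  move=> y; apply: le_trans (T_bound P0h P1h Pjh hV hDV hmuh hsigh y b0') _.
  by apply: lee_wpmul2r; [exact: Hh0|rewrite lee_fin le_max lexx].
have TsC : forall y, ((`|Ts y|)%:E <= c%:E * Hs y)%E.
  move=> y; apply: le_trans (T_bound P0s P1s Pjs hV hDV hmus hsigs y b0') _.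
  by apply: lee_wpmul2r; [exact: Hs0|rewrite lee_fin le_max lexx orbT].
set rh := fun y => r (Uh y) (emb R y).
set rs := fun y => r (Ustar y) (emb R y).
have heh : forall y, rh y - alpha * Th y = Vl y - alpha * Er P Uh jh 1 Vl y.
  move=> y; case: (hHJB _ (orth_emb R y)) => _ heq _.
  move: heq; rewrite /rh /Th /Vl /Uh /=; lra.
have hes : forall y, rs y - alpha * Ts y <= Vl y - alpha * Er P Ustar js 1 Vl y.
  move=> y; case: (hHJB _ (orth_emb R y)) => _ _ /(_ _ (pols y)) hineq.
  move: hineq; rewrite /rs /Ts /Vl /=; lra.
have [Vh [VhE hsh]] := VU_real P0h P1h Pjh (ltW al0) (hfin Uh polh x).
have [Vs [VsE hss]] := VU_real P0s P1s Pjs (ltW al0) (hfin Ustar pols x).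
have tailh := tail_Er P0h P1h Pjh x al01' G0 hgl.
have tails := tail_Er P0s P1s Pjs x al01' G0 hgl.
have ErN : forall (U : 'rV[nat]_d -> 'cV[R]_m) j t g y,
    Er P U j t (fun z => - g z) y = - Er P U j t g y.
  move=> U j t g y; rewrite -mulN1r -ErZ; apply: Er_ext => z; by rewrite mulN1r.
have hA : ((Vh - Vl x)%:E <= c%:E * Edisc P Uh alpha Hh x)%E.
  apply: (verif P0h (rr := rh) (T := Th) al01 c0 Hh0 ThC).
  - by move=> y; rewrite heh.
  - exact: tailh.
  - exact: hsh.
have hB : ((Vl x - Vh)%:E <= c%:E * Edisc P Uh alpha Hh x)%E.
  have := @verif _ _ _ P Uh jh P0h (fun y => - Vl y) (fun y => - rh y) (fun y => - Th y)
     alpha c Hh x (- Vh) al01 c0 Hh0.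
  have -> : - Vh - - Vl x = Vl x - Vh by ring.
  apply.
  - by move=> y; rewrite normrN.
  - by move=> y; rewrite ErN; have := heh y; lra.
  - exact: (tail_Er P0h P1h Pjh (Vl := fun y => - Vl y) x al01' G0 hgl').
  - have -> : ((fun n => \sum_(t < n) alpha ^+ t * Er P Uh jh t (fun y => - rh y) x) : R^nat) =
        - (fun n => \sum_(t < n) alpha ^+ t * Er P Uh jh t rh x).
      apply: funext => n; transitivity (- \sum_(t < n) alpha ^+ t * Er P Uh jh t rh x); last by [].
      rewrite -sumrN; apply: eq_bigr => t _; rewrite ErN; ring.
    exact: cvgN.
have hC : ((Vs - Vl x)%:E <= c%:E * Edisc P Ustar alpha Hs x)%E.
  apply: (verif P0s (rr := rs) (T := Ts) al01 c0 Hs0 TsC).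
  - exact: hes.
  - exact: tails.
  - exact: hss.
have hVhs : Vh <= Vs by rewrite -lee_fin -VhE -VsE; exact: hopt.
change (maxe `|(Vhat (emb R x))%:E - VU P r Ustar alpha x| `|VU P r Uh alpha x - VU P r Ustar alpha x|
   <= c%:E * (Edisc P Uh alpha Hh x + Edisc P Ustar alpha Hs x))%E.
rewrite VhE VsE -!EFinB !abse_EFin.
have XA0 : (0 <= Edisc P Uh alpha Hh x)%E := Edisc_ge0 P0h x (ltW al0) Hh0.
have XB0 : (0 <= Edisc P Ustar alpha Hs x)%E := Edisc_ge0 P0s x (ltW al0) Hs0.
rewrite ge0_muleDr //.
set XA := (c%:E * Edisc P Uh alpha Hh x)%E.
set XB := (c%:E * Edisc P Ustar alpha Hs x)%E.
have XA0' : (0 <= XA)%E by apply: mule_ge0; rewrite ?lee_fin.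
have XB0' : (0 <= XB)%E by apply: mule_ge0; rewrite ?lee_fin.
have [XAf|XAi] := boolP (XA \is a fin_num); last first.
  have -> : XA = (+oo)%E by move: XAi; rewrite ge0_fin_numE // -leNgt leye_eq => /eqP.
  by rewrite addye ?leey // gt_eqF // (lt_le_trans _ XB0') // ltNye.
have [XBf|XBi] := boolP (XB \is a fin_num); last first.
  have -> : XB = (+oo)%E by move: XBi; rewrite ge0_fin_numE // -leNgt leye_eq => /eqP.
  by rewrite addey ?leey // gt_eqF // (lt_le_trans _ XA0') // ltNye.
move: hA hB hC; rewrite -/XA -/XB -(fineK XAf) -(fineK XBf) !lee_fin => hA hB hC.
rewrite -EFinD ge_max !lee_fin.
have fa0 : 0 <= fine XA by rewrite -lee_fin fineK.
have fb0 : 0 <= fine XB by rewrite -lee_fin fineK.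
rewrite /Vl /= in hA hB hC.
by apply/andP; split; rewrite ler_norml; apply/andP; split; lra.
Qed.
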